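(* Let $T>0$, $C_1>0$, and let $H:(0,1)^n\times\mathbb S(n)\to\mathbb R^n$, $B:(0,1)^n\times\mathbb S(n)\to\mathbb S(n)$ be $C^1$ with $(B(\mu,p),p)\ge(H(\mu,p),\mu)-C_1$ and $H_i(\mu,p)\ge-C_1$ for all $(\mu,p)\in(0,1)^n\times\mathbb S(n)$ and all $i$; let $g:[0,1]^n\to\mathbb R^n$. Let $\lambda\in[0,1]$, $t\in[0,T)$, $\mu\in\mathcal P_0(\mathbb G)$, and let $(\phi,\rho):[t,T]\to\mathbb R^n\times(0,1)^n$ be a classical solution of $$\dot\phi=H(\rho,\lambda\nabla_{\mathbb G}\phi)-\Delta_{\mathbb G}\phi,\quad\dot\rho=\nabla_{\mathbb G}\cdot B(\rho,\lambda\nabla_{\mathbb G}\phi)+\Delta_{\mathbb G}\rho\ \text{ on }(t,T),\quad\phi(T)=g(\rho(T)),\ \rho(t)=\mu.$$ Then $\lambda(\phi(T),\rho(T))\le\lambda(\phi(t),\mu)+2C_1(T-t)$.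
   Context: $\mathbb G$: finite connected simple undirected graph on $\{1,\dots,n\}$ with symmetric edge weights $\omega_{ij}>0$ iff $(i,j)\in\mathbb E$. $\mathbb S(n)$: skew-symmetric matrices with $(m,\tilde m)=\frac12\sum_{(i,j)\in\mathbb E}m^{ij}\tilde m^{ij}$; $(\cdot,\cdot)$ on $\mathbb R^n$ is Euclidean. $(\nabla_{\mathbb G}u)^{ij}=\sqrt{\omega_{ij}}(u^i-u^j)$, $(\nabla_{\mathbb G}\cdot m)^i=\sum_{j\ne i}\sqrt{\omega_{ij}}m^{ji}$, $(\Delta_{\mathbb G}u)^i=\sum_j\omega_{ij}(u^j-u^i)$. $\mathcal P_0(\mathbb G)$: probability vectors with positive entries. Classical solution: a $C^1$ pair satisfying the system pointwise. *)

(* Defs.v *)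
From HB Require Import structures.
From mathcomp Require Import all_boot all_order all_algebra.
From mathcomp Require Import all_classical all_reals all_analysis.
Set Implicit Arguments. Unset Strict Implicit. Unset Printing Implicit Defensive.
Import Order.TTheory GRing.Theory Num.Theory.
Import numFieldNormedType.Exports.
Local Open Scope classical_set_scope.
Local Open Scope ring_scope.

Section Defs.
Variables (R : realType) (n : nat).

(* A weighted finite connected simple undirected graph on 'I_n, encoded by
   its weights: (i,j) is an edge iff 0 < w i j. *)
Definition edge (w : 'I_n -> 'I_n -> R) : rel 'I_n := fun i j => 0 < w i j.

Definition weighted_graph (w : 'I_n -> 'I_n -> R) : Prop :=
  [/\ forall i j, 0 <= w i j,
      forall i j, w i j = w j i,
      forall i, w i i = 0 &
      forall i j, connect (edge w) i j].

Definition skewS (m : 'M[R]_n) : Prop := m^T = - m.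

Definition ipS (w : 'I_n -> 'I_n -> R) (m m' : 'M[R]_n) : R :=
  2^-1 * \sum_(i < n) \sum_(j < n | edge w i j) m i j * m' i j.

Definition ipE (u v : 'rV[R]_n) : R := \sum_(i < n) u ord0 i * v ord0 i.

Definition grad (w : 'I_n -> 'I_n -> R) (u : 'rV[R]_n) : 'M[R]_n :=
  \matrix_(i, j) (Num.sqrt (w i j) * (u ord0 i - u ord0 j)).

Definition div (w : 'I_n -> 'I_n -> R) (m : 'M[R]_n) : 'rV[R]_n :=
  \row_i \sum_(j < n | j != i) Num.sqrt (w i j) * m j i.

Definition lap (w : 'I_n -> 'I_n -> R) (u : 'rV[R]_n) : 'rV[R]_n :=
  \row_i \sum_(j < n) w i j * (u ord0 j - u ord0 i).

Definition open01 (x : 'rV[R]_n) : Prop := forall i, 0 < x ord0 i < 1.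

Definition P0 (x : 'rV[R]_n) : Prop :=
  (forall i, 0 < x ord0 i) /\ \sum_(i < n) x ord0 i = 1.

Definition skewpart (m : 'M[R]_n) : 'M[R]_n := 2^-1 *: (m - m^T).

End Defs.

Definition C1_on (R : realType) (V W : normedModType R) (U : set V)
  (f : V -> W) : Prop :=
  forall v : V, (forall x, U x -> derivable f x v) /\
                (forall x, U x -> {for x, continuous (fun y => 'D_v f y)}).

Definition C1_interval (R : realType) (W : normedModType R) (a b : R)
  (f : R -> W) : Prop :=
  {within `[a, b], continuous f} /\
  (forall s, a < s < b -> derivable f s 1) /\
  exists f' : R -> W, {within `[a, b], continuous f'} /\
    (forall s, a < s < b -> 'D_1 f s = f' s).

(* Main.v *)
Require Import Defs.
From HB Require Import structures.
From mathcomp Require Import all_boot all_order all_algebra.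
From mathcomp Require Import all_classical all_reals all_analysis.
From mathcomp Require Import ring lra.
Import Order.TTheory GRing.Theory Num.Theory.
Import numFieldNormedType.Exports.
Local Open Scope classical_set_scope.
Local Open Scope ring_scope.

Section Alg.
Variables (R : realType) (n : nat) (w : 'I_n -> 'I_n -> R).
Hypothesis w0 : forall i j, 0 <= w i j.
Hypothesis wS : forall i j, w i j = w j i.
Hypothesis wd : forall i, w i i = 0.

Lemma skew_grad u : skewS (grad w u).
Proof.
apply/matrixP => i j; rewrite !mxE wS; ring.
Qed.

Lemma skew_scale (a : R) (m : 'M[R]_n) : skewS m -> skewS (a *: m).
Proof.
rewrite /skewS => h; apply/matrixP => i j.
have := congr1 (fun M : 'M[R]_n => M i j) h; rewrite !mxE => ->; ring.
Qed.

Lemma ipS_full m q : ipS w m q = 2^-1 * \sum_(i < n) \sum_(j < n) m i j * q i j * (w i j != 0 :> R)%:R.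
Proof.
rewrite /ipS; congr (_ * _); apply: eq_bigr => i _.
rewrite big_mkcond /=; apply: eq_bigr => j _; rewrite /edge lt_def (w0 i j) andbT.
by case: eqP => _ /=; rewrite ?mulr0 ?mulr1.
Qed.

Lemma sqrtw_nz i j : Num.sqrt (w i j) * (w i j != 0 :> R)%:R = Num.sqrt (w i j).
Proof. by case: eqP => [->|_]; rewrite ?sqrtr0 ?mulr0 ?mulr1. Qed.

Lemma ip_div u m : skewS m -> ipE u (div w m) = - ipS w m (grad w u).
Proof.
move=> sk.
have mS i j : m j i = - m i j by have := congr1 (fun M : 'M[R]_n => M i j) sk; rewrite !mxE.
rewrite ipS_full /ipE.
have -> : \sum_(i < n) \sum_(j < n) m i j * grad w u i j * (w i j != 0 :> R)%:R
   = \sum_(i < n) \sum_(j < n) (m i j * Num.sqrt (w i j) * u ord0 i)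
   - \sum_(i < n) \sum_(j < n) (m i j * Num.sqrt (w i j) * u ord0 j).
  rewrite -sumrB; apply: eq_bigr => i _; rewrite -sumrB; apply: eq_bigr => j _.
  rewrite !mxE; have [->|nz] := eqVneq (w i j) 0.
    by rewrite sqrtr0 /= mulr0n; ring.
  by rewrite /= mulr1n; ring.
rewrite [X in _ - X]exchange_big /=.
have -> : \sum_(j < n) \sum_(i < n) m i j * Num.sqrt (w i j) * u ord0 j
   = - \sum_(i < n) \sum_(j < n) (m i j * Num.sqrt (w i j) * u ord0 i).
  rewrite -sumrN; apply: eq_bigr => i _; rewrite -sumrN; apply: eq_bigr => j _.
  rewrite mS wS; ring.
have h2 : forall x : R, 2^-1 * (x + x) = x by move=> x; lra.
rewrite opprK h2 -sumrN.
apply: eq_bigr => i _; rewrite !mxE mulr_sumr -sumrN.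
rewrite [in RHS](bigD1 i) //= wd sqrtr0 mulr0 mul0r oppr0 add0r.
apply: eq_bigr => j _; rewrite mS; ring.
Qed.


Lemma ip_lap u v : ipE (lap w u) v = ipE u (lap w v).
Proof.
rewrite /ipE.
have -> : \sum_(i < n) lap w u ord0 i * v ord0 i =
  \sum_(i < n) \sum_(j < n) w i j * u ord0 j * v ord0 i -
  \sum_(i < n) \sum_(j < n) w i j * u ord0 i * v ord0 i.
  rewrite -sumrB; apply: eq_bigr => i _; rewrite -sumrB mxE mulr_suml.
  by apply: eq_bigr => j _; ring.
have -> : \sum_(i < n) u ord0 i * lap w v ord0 i =
  \sum_(i < n) \sum_(j < n) w i j * u ord0 i * v ord0 j -
  \sum_(i < n) \sum_(j < n) w i j * u ord0 i * v ord0 i.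
  rewrite -sumrB; apply: eq_bigr => i _; rewrite -sumrB mxE mulr_sumr.
  by apply: eq_bigr => j _; ring.
congr (_ - _); rewrite exchange_big /=; apply: eq_bigr => i _; apply: eq_bigr => j _.
by rewrite wS.
Qed.

Lemma sum_lap v : \sum_(i < n) lap w v ord0 i = 0.
Proof.
have -> : \sum_(i < n) lap w v ord0 i =
  \sum_(i < n) \sum_(j < n) w i j * v ord0 j -
  \sum_(i < n) \sum_(j < n) w i j * v ord0 i.
  rewrite -sumrB; apply: eq_bigr => i _; rewrite -sumrB mxE.
  by apply: eq_bigr => j _; ring.
rewrite exchange_big /=; apply/eqP; rewrite subr_eq0; apply/eqP.
apply: eq_bigr => i _; apply: eq_bigr => j _.
by rewrite wS.
Qed.

Lemma sum_div m : skewS m -> \sum_(i < n) div w m ord0 i = 0.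
Proof.
move=> sk.
have mS i j : m j i = - m i j by have := congr1 (fun M : 'M[R]_n => M i j) sk; rewrite !mxE.
have -> : \sum_(i < n) div w m ord0 i =
  \sum_(i < n) \sum_(j < n) Num.sqrt (w i j) * m j i.
  apply: eq_bigr => i _; rewrite mxE [in RHS](bigD1 i) //= wd sqrtr0 mul0r add0r.
  done.
set S := (X in X = 0).
have : S = - S.
  rewrite {1}/S exchange_big /= -sumrN; apply: eq_bigr => i _.
  rewrite -sumrN; apply: eq_bigr => j _; rewrite wS mS; ring.
move=> h; lra.
Qed.

Lemma ipS_scale m q (a : R) : ipS w m (a *: q) = a * ipS w m q.
Proof.
rewrite /ipS mulrCA; congr (_ * _); rewrite mulr_sumr; apply: eq_bigr => i _.
rewrite mulr_sumr; apply: eq_bigr => j _; rewrite mxE; ring.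
Qed.


Lemma ipED (a b c : 'rV[R]_n) : ipE (a + b) c = ipE a c + ipE b c.
Proof. rewrite /ipE -big_split; apply: eq_bigr => i _; by rewrite !mxE mulrDl. Qed.
Lemma ipEB (a b c : 'rV[R]_n) : ipE (a - b) c = ipE a c - ipE b c.
Proof. rewrite /ipE -sumrB; apply: eq_bigr => i _; rewrite !mxE; ring. Qed.
Lemma ipEDr (a b c : 'rV[R]_n) : ipE a (b + c) = ipE a b + ipE a c.
Proof. rewrite /ipE -big_split; apply: eq_bigr => i _; by rewrite !mxE mulrDr. Qed.

Lemma key (H : 'rV[R]_n -> 'M[R]_n -> 'rV[R]_n) (B : 'rV[R]_n -> 'M[R]_n -> 'M[R]_n)
  (C1 lam : R) (ph rh : 'rV[R]_n) :
  (forall m p, open01 m -> skewS p -> skewS (B m p)) ->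
  (forall m p, open01 m -> skewS p ->
     ipE (H m p) m - C1 <= ipS w (B m p) p) ->
  (forall m p i, open01 m -> skewS p -> - C1 <= H m p ord0 i) ->
  0 <= C1 -> 0 <= lam <= 1 -> open01 rh -> \sum_(i < n) rh ord0 i = 1 ->
  lam * (ipE (H rh (lam *: grad w ph) - lap w ph) rh +
         ipE ph (div w (B rh (lam *: grad w ph)) + lap w rh)) <= 2 * C1.
Proof.
move=> hB hHB hH C0 /andP[l0 l1] orh srh.
set p := lam *: grad w ph.
have sp : skewS p by apply: skew_scale; apply: skew_grad.
have sb := hB _ _ orh sp.
rewrite ipEB ipEDr ip_div // ip_lap.
have e1 := hHB _ _ orh sp.
rewrite /p ipS_scale in e1.
have e2 : - C1 <= ipE (H rh p) rh.
  have -> : - C1 = \sum_(i < n) (- C1) * rh ord0 i by rewrite -mulr_sumr srh mulr1.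
  apply: ler_sum => i _; rewrite ler_wpM2r //.
    by have /andP[/ltW] := orh i.
  exact: hH.
rewrite /p in e2.
set E := ipE _ rh in e1 e2 *.
set S := ipS _ _ _ in e1 *.
set L := ipE ph _.
have : 0 <= (1 - lam) * (E + C1) by apply: mulr_ge0; lra.
have : 0 <= lam * C1 by apply: mulr_ge0.
nra.
Qed.

End Alg.
Section An.
Variables (R : realType) (n : nat).

Lemma coord_der (phi : R -> 'rV[R]_n) s i : derivable phi s 1 ->
  derivable (fun x => phi x ord0 i) s 1 /\
  'D_1 (fun x => phi x ord0 i) s = 'D_1 phi s ord0 i.
Proof.
move=> d; split; first by move/derivable_mxP: d; apply.
by rewrite (derive_mx d) mxE.
Qed.

Lemma deriv_ip (phi rho : R -> 'rV[R]_n) s :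
  derivable phi s 1 -> derivable rho s 1 ->
  is_derive s 1 (fun x => ipE (phi x) (rho x))
    (ipE ('D_1 phi s) (rho s) + ipE (phi s) ('D_1 rho s)).
Proof.
move=> dp dr.
have -> : (fun x => ipE (phi x) (rho x)) =
   \sum_(i < n) (fun x => phi x ord0 i * rho x ord0 i).
  by apply: funext => x; rewrite /ipE fct_sumE.
apply: is_derive_eq.
  apply: is_derive_sum => i.
  have [d1 e1] := coord_der phi s i dp.
  have [d2 e2] := coord_der rho s i dr.
  have h1 : is_derive s 1 (fun x => phi x ord0 i) ('D_1 phi s ord0 i).
    by rewrite -e1; apply: derivableP.
  have h2 : is_derive s 1 (fun x => rho x ord0 i) ('D_1 rho s ord0 i).
    by rewrite -e2; apply: derivableP.
  exact: (is_deriveM h1 h2).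
rewrite /ipE -big_split /=; apply: eq_bigr => i _.
rewrite /GRing.scale /=. ring.
Qed.


Lemma cont_ip (A : set R) (phi rho : R -> 'rV[R]_n) :
  {within A, continuous phi} -> {within A, continuous rho} ->
  {within A, continuous (fun x => ipE (phi x) (rho x))}.
Proof.
move=> cp cr.
have -> : (fun x => ipE (phi x) (rho x)) =
   \sum_(i < n) (fun x => phi x ord0 i * rho x ord0 i).
  by apply: funext => x; rewrite /ipE fct_sumE.
move=> x.
have hi : forall i, {for x, continuous ((fun y => phi y ord0 i * rho y ord0 i) : subspace A -> R)}.
  move=> i; apply: continuousM.
    exact: (continuous_comp (cp x) (@coord_continuous R 1 n ord0 i _)).
  exact: (continuous_comp (cr x) (@coord_continuous R 1 n ord0 i _)).
elim/big_ind: _ => //.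
- exact: cvg_cst.
- move=> f g cf cg; exact: continuousD.
- move=> i _; exact: hi.
Qed.

End An.

Theorem lemma3p1 (R : realType) (n : nat) (w : 'I_n -> 'I_n -> R)
  (T C1 : R)
  (H : 'rV[R]_n -> 'M[R]_n -> 'rV[R]_n)
  (B : 'rV[R]_n -> 'M[R]_n -> 'M[R]_n)
  (g : 'rV[R]_n -> 'rV[R]_n)
  (lam t : R) (mu : 'rV[R]_n) (phi rho : R -> 'rV[R]_n) :
  weighted_graph w ->
  0 < T -> 0 < C1 ->
  C1_on [set x : 'rV[R]_n * 'M[R]_n | open01 x.1]
        (fun x => H x.1 (skewpart x.2)) ->
  C1_on [set x : 'rV[R]_n * 'M[R]_n | open01 x.1]
        (fun x => B x.1 (skewpart x.2)) ->
  (forall m p, open01 m -> skewS p -> skewS (B m p)) ->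
  (forall m p, open01 m -> skewS p ->
     ipE (H m p) m - C1 <= ipS w (B m p) p) ->
  (forall m p i, open01 m -> skewS p -> - C1 <= H m p ord0 i) ->
  0 <= lam <= 1 -> 0 <= t < T -> P0 mu ->
  C1_interval t T phi -> C1_interval t T rho ->
  (forall s, t <= s <= T -> open01 (rho s)) ->
  (forall s, t < s < T ->
     'D_1 phi s = H (rho s) (lam *: grad w (phi s)) - lap w (phi s)) ->
  (forall s, t < s < T ->
     'D_1 rho s = div w (B (rho s) (lam *: grad w (phi s))) + lap w (rho s)) ->
  phi T = g (rho T) -> rho t = mu ->
  lam * ipE (phi T) (rho T) <= lam * ipE (phi t) mu + 2 * C1 * (T - t).
Proof.
move=> [w0 wS wd _] T0 C0 _ _ hB hHB hH hlam /andP[t0 tT] [_ smu]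
  [cphi [dphi _]] [crho [drho _]] orho Dphi Drho _ rhot.
set one : 'rV[R]_n := const_mx 1.
have cone : {within `[t, T], continuous (fun _ : R => one)}.
  by move=> x; apply: cvg_cst.
have mass : forall s, t < s < T -> \sum_(i < n) rho s ord0 i = 1.
  set M := fun x => ipE ((fun _ : R => one) x) (rho x).
  have Mv : forall x, M x = \sum_(i < n) rho x ord0 i.
    by move=> x; rewrite /M /ipE; apply: eq_bigr => i _; rewrite mxE mul1r.
  have dM : forall x, x \in `]t, T[ -> is_derive x 1 M 0.
    move=> x; rewrite in_itv /= => xi.
    have := @deriv_ip _ _ (fun _ => one) rho x (derivable_cst one x 1) (drho x xi).
    rewrite derive_cst Drho // /ipE big1 ?add0r; last by move=> i _; rewrite mxE mul0r.
    move=> h; apply: is_derive_eq h _.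
    have -> : \sum_(i < n) one ord0 i * (div w (B (rho x) (lam *: grad w (phi x))) +
                 lap w (rho x)) ord0 i =
      \sum_(i < n) div w (B (rho x) (lam *: grad w (phi x))) ord0 i +
      \sum_(i < n) lap w (rho x) ord0 i.
      by rewrite -big_split; apply: eq_bigr => i _; rewrite !mxE mul1r.
    rewrite sum_lap // sum_div // ?addr0 //.
    apply: hB; first by apply: orho; rewrite !ltW //; case/andP: xi.
    apply: skew_scale; exact: skew_grad.
  have cM : {within `[t, T], continuous M} by apply: cont_ip.
  have Mt : M t = 1 by rewrite Mv rhot.
  move=> s si.
  have st : s \in `[t, T] by rewrite in_itv /= !ltW //; case/andP: si.
  have tt : t \in `[t, T] by rewrite in_itv /= lexx ltW.
  rewrite -Mv; apply/eqP; rewrite eq_le; apply/andP; split.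
    rewrite -Mt; apply: (ler0_derive1_le_cc _ _ cM) => //.
    - by move=> x /dM h; apply: ex_derive.
    - by move=> x /dM h; rewrite derive1E derive_val.
    - by case/andP: si => /ltW.
  rewrite -Mt; apply: (ger0_derive1_le_cc _ _ cM) => //.
  - by move=> x /dM h; apply: ex_derive.
  - by move=> x /dM h; rewrite derive1E derive_val.
  - by case/andP: si => /ltW.
set G := fun x => ipE (phi x) (rho x).
set f := lam *: G - (2 * C1) *: (@id R).
have df : forall x, x \in `]t, T[ -> is_derive x 1 f
   (lam * (ipE (H (rho x) (lam *: grad w (phi x)) - lap w (phi x)) (rho x) +
         ipE (phi x) (div w (B (rho x) (lam *: grad w (phi x))) + lap w (rho x)))
    - 2 * C1).
  move=> x; rewrite in_itv /= => xi.
  have h := @deriv_ip _ _ phi rho x (dphi x xi) (drho x xi).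
  rewrite -Dphi // -Drho //.
  apply: (is_derive_eq (is_deriveB (is_deriveZ lam h) (is_deriveZ (2 * C1) (is_derive_id x 1)))).
  by rewrite -[(2 * C1)%:A]/((2 * C1) * 1) mulr1.
have cf : {within `[t, T], continuous f}.
  move=> x; apply: continuousB.
    have e : lam *: G = (fun y => lam *: G y) := erefl.
    rewrite e; apply: continuousZl_tmp.
    move: (@cont_ip _ _ _ phi rho cphi crho x) => h; exact h.
  have c2 : {within `[t, T], continuous ((2 * C1) *: (@id R))}.
    apply: continuous_subspaceT.
    exact: (@scaler_continuous _ R^o (2 * C1)).
  exact: c2.
have tt : t \in `[t, T] by rewrite in_itv /= lexx ltW.
have TT : T \in `[t, T] by rewrite in_itv /= lexx ltW.
have := ler0_derive1_le_cc _ _ cf TT tt (ltW tT).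
have fE : forall x, f x = lam * ipE (phi x) (rho x) - 2 * C1 * x by [].
rewrite !fE rhot => h.
suff : lam * ipE (phi T) (rho T) - 2 * C1 * T <= lam * ipE (phi t) mu - 2 * C1 * t by lra.
apply: h.
  by move=> x /df h; apply: ex_derive.
move=> x xi; have := df x xi => dx.
rewrite derive1E derive_val subr_le0.
move: xi; rewrite in_itv /= => xi.
apply: (@key _ _ w w0 wS wd H B C1 lam (phi x) (rho x) hB hHB hH (ltW C0) hlam).
  by apply: orho; case/andP: xi => a b; rewrite !ltW.
exact: mass.
Qed.
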